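(* $\mathrm{Md}$ is a finite complete axiomatisation of the equational theory of cancellation meadows: for all $\Sigma_m$-terms $r,s$, $\mathrm{Md}\vdash r=s$ if and only if $r=s$ holds in every $\Sigma_m$-structure satisfying $\mathrm{Md}$ and the inverse law $\mathrm{IL}$.
   Context: $\Sigma_m=(0,1,+,\cdot,-,{}^{-1})$; $\mathrm{Md}$ is the set of equations $(x+y)+z=x+(y+z)$, $x+y=y+x$, $x+0=x$, $x+(-x)=0$, $(x\cdot y)\cdot z=x\cdot(y\cdot z)$, $x\cdot y=y\cdot x$, $1\cdot x=x$, $x\cdot(y+z)=x\cdot y+x\cdot z$, $(x^{-1})^{-1}=x$, $x\cdot(x\cdot x^{-1})=x$. The inverse law $\mathrm{IL}$ is the conditional axiom $x\neq 0\rightarrow x\cdot x^{-1}=1$. $\vdash$ is derivability in equational logic. *)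

(* Defs.v *)
From Stdlib Require Import List.
Import ListNotations.

Inductive term : Type :=
  | Var : nat -> term
  | Zero : term
  | One : term
  | Add : term -> term -> term
  | Mul : term -> term -> term
  | Opp : term -> term
  | Inv : term -> term.

Fixpoint subst (sg : nat -> term) (t : term) : term :=
  match t with
  | Var n => sg n
  | Zero => Zero
  | One => One
  | Add a b => Add (subst sg a) (subst sg b)
  | Mul a b => Mul (subst sg a) (subst sg b)
  | Opp a => Opp (subst sg a)
  | Inv a => Inv (subst sg a)
  end.

Definition equation := (term * term)%type.

Definition x := Var 0.
Definition y := Var 1.
Definition z := Var 2.

Definition Md : list equation :=
  [ (Add (Add x y) z, Add x (Add y z));
    (Add x y, Add y x);
    (Add x Zero, x);
    (Add x (Opp x), Zero);
    (Mul (Mul x y) z, Mul x (Mul y z));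
    (Mul x y, Mul y x);
    (Mul One x, x);
    (Mul x (Add y z), Add (Mul x y) (Mul x z));
    (Inv (Inv x), x);
    (Mul x (Mul x (Inv x)), x) ].

Inductive derives (E : list equation) : term -> term -> Prop :=
  | d_ax : forall l r sg, In (l, r) E -> derives E (subst sg l) (subst sg r)
  | d_refl : forall t, derives E t t
  | d_sym : forall s t, derives E s t -> derives E t s
  | d_trans : forall s t u, derives E s t -> derives E t u -> derives E s u
  | d_add : forall a a' b b', derives E a a' -> derives E b b' ->
      derives E (Add a b) (Add a' b')
  | d_mul : forall a a' b b', derives E a a' -> derives E b b' ->
      derives E (Mul a b) (Mul a' b')
  | d_opp : forall a a', derives E a a' -> derives E (Opp a) (Opp a')
  | d_inv : forall a a', derives E a a' -> derives E (Inv a) (Inv a').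

Record structure : Type := Struct {
  carrier : Type;
  s0 : carrier;
  s1 : carrier;
  sadd : carrier -> carrier -> carrier;
  smul : carrier -> carrier -> carrier;
  sopp : carrier -> carrier;
  sinv : carrier -> carrier }.

Fixpoint eval (A : structure) (v : nat -> carrier A) (t : term) : carrier A :=
  match t with
  | Var n => v n
  | Zero => s0 A
  | One => s1 A
  | Add a b => sadd A (eval A v a) (eval A v b)
  | Mul a b => smul A (eval A v a) (eval A v b)
  | Opp a => sopp A (eval A v a)
  | Inv a => sinv A (eval A v a)
  end.

Definition holds (A : structure) (r s : term) : Prop :=
  forall v : nat -> carrier A, eval A v r = eval A v s.

Definition models (A : structure) (E : list equation) : Prop :=
  forall l r, In (l, r) E -> holds A l r.

Definition IL (A : structure) : Prop :=
  forall a : carrier A, a <> s0 A -> smul A a (sinv A a) = s1 A.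

(* Main.v *)
Require Import Defs.
From Stdlib Require Import List Setoid Morphisms Ring.
From Stdlib Require Import Classical ClassicalEpsilon FunctionalExtensionality PropExtensionality ProofIrrelevance.
Import ListNotations.
Import Defs.

Lemma eval_subst A v sg t : eval A v (subst sg t) = eval A (fun n => eval A v (sg n)) t.
Proof. induction t; simpl; congruence. Qed.

Lemma soundness r s : derives Md r s -> forall A, models A Md -> holds A r s.
Proof.
  intros H A HA. unfold holds in *. induction H; intro v; simpl.
  - rewrite !eval_subst. apply (HA l r H).
  - reflexivity.
  - now rewrite IHderives.
  - now rewrite IHderives1, IHderives2.
  - now rewrite IHderives1, IHderives2.
  - now rewrite IHderives1, IHderives2.
  - now rewrite IHderives.
  - now rewrite IHderives.
Qed.

Notation "a =~ b" := (derives Md a b) (at level 70).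

#[global] Instance eqv : Equivalence (derives Md).
Proof. split; [intro; apply d_refl | intros ??; apply d_sym | intros ???; apply d_trans]. Qed.
#[global] Instance add_prop : Proper (derives Md ==> derives Md ==> derives Md) Add.
Proof. intros ?????; now apply d_add. Qed.
#[global] Instance mul_prop : Proper (derives Md ==> derives Md ==> derives Md) Mul.
Proof. intros ?????; now apply d_mul. Qed.
#[global] Instance opp_prop : Proper (derives Md ==> derives Md) Opp.
Proof. intros ??; now apply d_opp. Qed.
#[global] Instance inv_prop : Proper (derives Md ==> derives Md) Inv.
Proof. intros ??; now apply d_inv. Qed.

Definition Sub a b := Add a (Opp b).
#[global] Instance sub_prop : Proper (derives Md ==> derives Md ==> derives Md) Sub.
Proof. intros ?? H ?? H'; unfold Sub; now rewrite H, H'. Qed.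

Definition sg3 a b c : nat -> term := fun n => match n with 0 => a | 1 => b | _ => c end.

Ltac ax n a b c := exact (d_ax Md (fst (nth n Md (Zero,Zero))) (snd (nth n Md (Zero,Zero))) (sg3 a b c) ltac:(simpl; tauto)).

Lemma ax_add_assoc a b c : Add (Add a b) c =~ Add a (Add b c). Proof. ax 0 a b c. Qed.
Lemma ax_add_comm a b : Add a b =~ Add b a. Proof. ax 1 a b a. Qed.
Lemma ax_add_0 a : Add a Zero =~ a. Proof. ax 2 a a a. Qed.
Lemma ax_opp a : Add a (Opp a) =~ Zero. Proof. ax 3 a a a. Qed.
Lemma ax_mul_assoc a b c : Mul (Mul a b) c =~ Mul a (Mul b c). Proof. ax 4 a b c. Qed.
Lemma ax_mul_comm a b : Mul a b =~ Mul b a. Proof. ax 5 a b a. Qed.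
Lemma ax_mul_1 a : Mul One a =~ a. Proof. ax 6 a a a. Qed.
Lemma ax_distr a b c : Mul a (Add b c) =~ Add (Mul a b) (Mul a c). Proof. ax 7 a b c. Qed.
Lemma inv_inv a : Inv (Inv a) =~ a. Proof. ax 8 a a a. Qed.
Lemma refl_ax a : Mul a (Mul a (Inv a)) =~ a. Proof. ax 9 a a a. Qed.

Lemma term_ring : ring_theory Zero One Add Mul Sub Opp (derives Md).
Proof.
  constructor; intros x1 y1 z1 || intros x1 y1 || intros x1 || idtac.
  - rewrite ax_add_comm; apply ax_add_0.
  - apply ax_add_comm.
  - symmetry; apply ax_add_assoc.
  - apply ax_mul_1.
  - apply ax_mul_comm.
  - symmetry; apply ax_mul_assoc.
  - rewrite ax_mul_comm, ax_distr, (ax_mul_comm z1 x1), (ax_mul_comm z1 y1). reflexivity.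
  - reflexivity.
  - apply ax_opp.
Qed.

Lemma term_eq_ext : ring_eq_ext Add Mul Opp (derives Md).
Proof. constructor; typeclasses eauto. Qed.

Add Ring termring : term_ring (setoid eqv term_eq_ext).

Lemma inv_tri a : Mul (Inv a) (Mul (Inv a) a) =~ Inv a.
Proof. rewrite <- (inv_inv a) at 3. apply refl_ax. Qed.

Definition mem (g u : term) : Prop := exists m, u =~ Mul m g.
Definition idem (t : term) : term := Mul t (Inv t).
Definition join (g f : term) : term := Sub (Add g f) (Mul g f).

#[global] Instance mem_proper g : Proper (derives Md ==> iff) (mem g).
Proof. intros u v H; split; intros [m Hm]; exists m; [rewrite <- H | rewrite H]; exact Hm. Qed.

Definition step (e g t : term) : term :=
  if excluded_middle_informative (mem (join g (idem t)) e) then g else join g (idem t).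

Fixpoint enum (n : nat) : list term :=
  match n with
  | 0 => [Var 0; Zero; One]
  | S k => let l := enum k in
      Var (S k) :: l ++ map Opp l ++ map Inv l ++
        flat_map (fun a => map (fun b => Add a b) l) l ++
        flat_map (fun a => map (fun b => Mul a b) l) l
  end.

Fixpoint sz (t : term) : nat :=
  match t with
  | Var k => k
  | Zero | One => 0
  | Add a b | Mul a b => S (max (sz a) (sz b))
  | Opp a | Inv a => S (sz a)
  end.

Lemma enum_mono1 t n : In t (enum n) -> In t (enum (S n)).
Proof. intro H; simpl; right; apply in_or_app; left; exact H. Qed.

Lemma enum_mono t n m : In t (enum n) -> n <= m -> In t (enum m).
Proof. intros H Hle; induction Hle; auto using enum_mono1. Qed.

Lemma enum_cover t : In t (enum (sz t)).
Proof.
  induction t; simpl.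
  - destruct n; simpl; auto.
  - auto.
  - auto.
  - right; rewrite !in_app_iff; right; right; right; left.
    apply in_flat_map; exists t1; split.
    + eapply enum_mono; [exact IHt1| apply PeanoNat.Nat.le_max_l].
    + apply in_map; eapply enum_mono; [exact IHt2| apply PeanoNat.Nat.le_max_r].
  - right; rewrite !in_app_iff; right; right; right; right.
    apply in_flat_map; exists t1; split.
    + eapply enum_mono; [exact IHt1| apply PeanoNat.Nat.le_max_l].
    + apply in_map; eapply enum_mono; [exact IHt2| apply PeanoNat.Nat.le_max_r].
  - right; rewrite !in_app_iff; right; left; apply in_map; auto.
  - right; rewrite !in_app_iff; right; right; left; apply in_map; auto.
Qed.

Definition P (e g : term) : Prop := Mul g g =~ g /\ ~ mem g e.
Definition Q (e g t : term) : Prop :=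
  mem g t \/ exists i a, mem g i /\ e =~ Add i (Mul a t).

Lemma Q_mono e g g' t : Q e g t -> (forall u, mem g u -> mem g' u) -> Q e g' t.
Proof.
  intros [H|[i [a [Hi He]]]] M; [left; auto| right; exists i, a; auto].
Qed.

Lemma idem_idem t : Mul (idem t) (idem t) =~ idem t.
Proof.
  unfold idem. transitivity (Mul (Mul t (Mul t (Inv t))) (Inv t)); [ring|].
  rewrite refl_ax; reflexivity.
Qed.

Lemma join_idem g f : Mul g g =~ g -> Mul f f =~ f -> Mul (join g f) (join g f) =~ join g f.
Proof.
  intros Hg Hf. unfold join.
  transitivity (Add (Add (Add (Mul g g) (Mul f f)) (Mul (Mul g g) (Mul f f)))
     (Sub (Mul (Add One One) (Mul g f))
        (Add (Mul (Add One One) (Mul (Mul g g) f)) (Mul (Add One One) (Mul g (Mul f f)))))); [ring|].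
  rewrite Hg, Hf. ring.
Qed.

Lemma join_absorb_l g f : Mul g g =~ g -> Mul g (join g f) =~ g.
Proof.
  intros Hg. unfold join.
  transitivity (Add (Mul g g) (Sub (Mul g f) (Mul (Mul g g) f))); [ring|].
  rewrite Hg; ring.
Qed.

Lemma join_absorb_r g f : Mul f f =~ f -> Mul f (join g f) =~ f.
Proof.
  intros Hf. unfold join.
  transitivity (Add (Mul f f) (Sub (Mul f g) (Mul (Mul f f) g))); [ring|].
  rewrite Hf; ring.
Qed.

Lemma step_inv e g t : P e g ->
  P e (step e g t) /\ (forall u, mem g u -> mem (step e g t) u) /\ Q e (step e g t) t.
Proof.
  intros [Hg Hn]. unfold step.
  destruct (excluded_middle_informative (mem (join g (idem t)) e)) as [Hm|Hm].
  - split; [split; auto|split; [auto|]].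
    right. destruct Hm as [m Hm].
    exists (Mul (Sub m (Mul m (idem t))) g), (Mul m (Inv t)). split.
    + exists (Sub m (Mul m (idem t))); reflexivity.
    + rewrite Hm; unfold join, idem; ring.
  - split; [split; [apply join_idem; auto using idem_idem | exact Hm]|split].
    + intros u [m Hu]. exists (Mul m g). rewrite Hu.
      rewrite <- (join_absorb_l g (idem t)) at 1 by exact Hg. ring.
    + left. exists (Mul t (idem t)).
      transitivity (Mul t (idem t)); [symmetry; apply refl_ax|].
      rewrite <- (join_absorb_r g (idem t)) at 1 by apply idem_idem. ring.
Qed.

Lemma fold_inv e l : forall g, P e g ->
  P e (fold_left (step e) l g) /\ (forall u, mem g u -> mem (fold_left (step e) l g) u)
  /\ (forall t, In t l -> Q e (fold_left (step e) l g) t).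
Proof.
  induction l as [|a l IH]; simpl; intros g Pg.
  - split; [auto|split; [auto| intros t []]].
  - destruct (step_inv e g a Pg) as [P1 [M1 Q1]].
    destruct (IH _ P1) as [P2 [M2 Q2]].
    split; [exact P2|split; [auto|]].
    intros t [<-|Hin]; [eapply Q_mono; eauto| auto].
Qed.

Fixpoint G (e : term) (n : nat) : term :=
  match n with 0 => Zero | S k => fold_left (step e) (enum k) (G e k) end.

Lemma G_inv e : P e Zero -> forall n, P e (G e n).
Proof. intros H0 n; induction n; simpl; [exact H0| apply fold_inv; exact IHn]. Qed.

Lemma G_mono1 e : P e Zero -> forall n u, mem (G e n) u -> mem (G e (S n)) u.
Proof. intros H0 n u Hu; simpl; apply (fold_inv e (enum n) (G e n) (G_inv e H0 n)); exact Hu. Qed.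

Lemma G_mono e : P e Zero -> forall n m u, n <= m -> mem (G e n) u -> mem (G e m) u.
Proof. intros H0 n m u Hle; induction Hle; auto using G_mono1. Qed.

Definition I (e u : term) : Prop := exists n, mem (G e n) u.

#[global] Instance I_proper e : Proper (derives Md ==> iff) (I e).
Proof. intros u v H; split; intros [n Hn]; exists n; [rewrite <- H | rewrite H]; exact Hn. Qed.

Lemma I_add e : P e Zero -> forall u v, I e u -> I e v -> I e (Add u v).
Proof.
  intros H0 u v [n Hu] [m Hv].
  apply (G_mono e H0 n (max n m)) in Hu; [|apply PeanoNat.Nat.le_max_l].
  apply (G_mono e H0 m (max n m)) in Hv; [|apply PeanoNat.Nat.le_max_r].
  exists (max n m). destruct Hu as [a Ha], Hv as [b Hb]. exists (Add a b).
  rewrite Ha, Hb; ring.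
Qed.

Lemma I_mul e u a : I e u -> I e (Mul a u).
Proof. intros [n [m Hm]]; exists n, (Mul a m); rewrite Hm; ring. Qed.

Lemma I_mulr e u a : I e u -> I e (Mul u a).
Proof. intros H; rewrite ax_mul_comm; apply I_mul; exact H. Qed.

Lemma I_zero e : I e Zero.
Proof. exists 0, Zero; simpl; ring. Qed.

Lemma I_eq0 e u : u =~ Zero -> I e u.
Proof. intros H; rewrite H; apply I_zero. Qed.

Lemma not_I_e e : P e Zero -> ~ I e e.
Proof. intros H0 [n Hn]; apply (G_inv e H0 n); exact Hn. Qed.

Lemma Q_all e : P e Zero -> forall t,
  I e t \/ exists i a, I e i /\ e =~ Add i (Mul a t).
Proof.
  intros H0 t.
  destruct (fold_inv e (enum (sz t)) (G e (sz t)) (G_inv e H0 _)) as [_ [_ Hq]].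
  destruct (Hq t (enum_cover t)) as [H|[i [a [Hi Ht]]]].
  - left; exists (S (sz t)); exact H.
  - right; exists i, a; split; [exists (S (sz t)); exact Hi| exact Ht].
Qed.

Lemma key e : Mul e e =~ e -> P e Zero -> forall u, ~ I e u -> I e (Sub One (Mul u (Inv u))).
Proof.
  intros He H0 u Hu. apply NNPP; intro Hw.
  destruct (Q_all e H0 u) as [H|[i1 [a1 [Hi1 E1]]]]; [contradiction|].
  destruct (Q_all e H0 (Sub One (Mul u (Inv u)))) as [H|[i2 [a2 [Hi2 E2]]]]; [contradiction|].
  apply (not_I_e e H0).
  assert (Hx : e =~ Add (Add (Mul i1 (Add i2 (Mul a2 (Sub One (Mul u (Inv u))))))
                          (Mul (Mul a1 u) i2))
                     (Mul (Mul a1 a2) (Sub u (Mul u (Mul u (Inv u)))))).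
  { rewrite <- He at 1. rewrite E1 at 1. rewrite E2 at 1. ring. }
  apply (I_proper e e _ Hx). apply I_add; [exact H0| apply I_add; [exact H0|..]|].
  - apply I_mulr; exact Hi1.
  - apply I_mul; exact Hi2.
  - apply I_mul, I_eq0. rewrite refl_ax; ring.
Qed.

Definition R (e u v : term) : Prop := I e (Sub u v).

Lemma R_of e u v : u =~ v -> R e u v.
Proof. intros H; unfold R; apply I_eq0; rewrite H; ring. Qed.

Lemma R_sym e u v : R e u v -> R e v u.
Proof. unfold R; intros H. assert (E : Sub v u =~ Mul (Opp One) (Sub u v)) by ring.
  rewrite E; apply I_mul; exact H. Qed.

Lemma R_trans e : P e Zero -> forall u v w, R e u v -> R e v w -> R e u w.
Proof. unfold R; intros H0 u v w H1 H2. assert (E : Sub u w =~ Add (Sub u v) (Sub v w)) by ring.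
  rewrite E; apply I_add; auto. Qed.

Lemma R_add e : P e Zero -> forall a a' b b', R e a a' -> R e b b' -> R e (Add a b) (Add a' b').
Proof. unfold R; intros H0 a a' b b' H1 H2.
  assert (E : Sub (Add a b) (Add a' b') =~ Add (Sub a a') (Sub b b')) by ring.
  rewrite E; apply I_add; auto. Qed.

Lemma R_mul e : P e Zero -> forall a a' b b', R e a a' -> R e b b' -> R e (Mul a b) (Mul a' b').
Proof. unfold R; intros H0 a a' b b' H1 H2.
  assert (E : Sub (Mul a b) (Mul a' b') =~ Add (Mul (Sub a a') b) (Mul a' (Sub b b'))) by ring.
  rewrite E; apply I_add; auto using I_mul, I_mulr. Qed.

Lemma R_opp e a a' : R e a a' -> R e (Opp a) (Opp a').
Proof. unfold R; intros H. assert (E : Sub (Opp a) (Opp a') =~ Mul (Opp One) (Sub a a')) by ring.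
  rewrite E; apply I_mul; exact H. Qed.

Lemma inv_aux e : P e Zero -> forall u v, I e (Sub u v) -> I e (Mul (Inv u) (Sub One (Mul v (Inv v)))).
Proof.
  intros H0 u v H. rewrite <- (inv_tri u) at 1.
  assert (E : Mul (Mul (Inv u) (Mul (Inv u) u)) (Sub One (Mul v (Inv v))) =~
     Mul (Mul (Inv u) (Inv u)) (Add (Mul (Sub u v) (Sub One (Mul v (Inv v))))
                                     (Sub v (Mul v (Mul v (Inv v)))))) by ring.
  rewrite E, refl_ax. apply I_mul. apply I_add; [exact H0| apply I_mulr; exact H| apply I_eq0; ring].
Qed.

Lemma R_inv e : P e Zero -> forall a a', R e a a' -> R e (Inv a) (Inv a').
Proof.
  unfold R; intros H0 a a' H.
  assert (E : Sub (Inv a) (Inv a') =~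
     Add (Add (Mul (Mul (Inv a) (Inv a')) (Sub a' a)) (Mul (Inv a) (Sub One (Mul a' (Inv a')))))
         (Opp (Mul (Inv a') (Sub One (Mul a (Inv a)))))) by ring.
  rewrite E. apply I_add; [exact H0| apply I_add; [exact H0| |]|].
  - apply I_mul; apply (R_sym e a a' H).
  - apply inv_aux; auto.
  - assert (E2 : forall w, Opp w =~ Mul (Opp One) w) by (intros; ring).
    rewrite E2; apply I_mul; apply inv_aux; auto; apply (R_sym e a a' H).
Qed.

Definition car (e : term) : Type := {Pr : term -> Prop | exists t, Pr = R e t}.
Definition cls (e t : term) : car e := exist _ (R e t) (ex_intro _ t eq_refl).
Definition rep (e : term) (a : car e) : term :=
  proj1_sig (constructive_indefinite_description _ (proj2_sig a)).

Lemma rep_spec e (a : car e) : proj1_sig a = R e (rep e a).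
Proof. unfold rep. destruct (constructive_indefinite_description _ _); simpl; auto. Qed.

Lemma car_ext e (a b : car e) : proj1_sig a = proj1_sig b -> a = b.
Proof. destruct a as [a pa], b as [b pb]; simpl; intros ->; f_equal; apply proof_irrelevance. Qed.

Lemma cls_rep e (a : car e) : cls e (rep e a) = a.
Proof. apply car_ext; simpl; symmetry; apply rep_spec. Qed.

Lemma cls_eq e : P e Zero -> forall t u, cls e t = cls e u <-> R e t u.
Proof.
  intros H0 t u; split.
  - intros H. apply (f_equal (@proj1_sig _ _)) in H; simpl in H.
    rewrite H. apply R_of; reflexivity.
  - intros H. apply car_ext; simpl. apply functional_extensionality; intro w.
    apply propositional_extensionality; split; intro Hw.
    + eapply R_trans; [exact H0| apply R_sym; exact H| exact Hw].
    + eapply R_trans; [exact H0| exact H| exact Hw].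
Qed.

Lemma rep_cls e : P e Zero -> forall t, R e (rep e (cls e t)) t.
Proof. intros H0 t; apply (cls_eq e H0); apply cls_rep. Qed.

Definition N (e : term) : structure :=
  Struct (car e) (cls e Zero) (cls e One)
    (fun a b => cls e (Add (rep e a) (rep e b)))
    (fun a b => cls e (Mul (rep e a) (rep e b)))
    (fun a => cls e (Opp (rep e a)))
    (fun a => cls e (Inv (rep e a))).

Lemma eval_N e : P e Zero -> forall v sg, (forall n, v n = cls e (sg n)) ->
  forall t, eval (N e) v t = cls e (subst sg t).
Proof.
  intros H0 v sg Hv t; induction t; simpl; auto;
  rewrite ?IHt, ?IHt1, ?IHt2; apply (cls_eq e H0);
  auto using R_add, R_mul, R_opp, R_inv, rep_cls.
Qed.

Lemma subst_var t : subst Var t = t.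
Proof. induction t; simpl; congruence. Qed.

Theorem corollary1 : forall r s : term,
  derives Md r s <-> (forall A : structure, models A Md -> IL A -> holds A r s).
Proof.
  intros r s; split.
  - intros H A HA _; exact (soundness r s H A HA).
  - intros H. apply NNPP; intro Hn.
    set (d := Sub r s). set (e := Mul d (Inv d)).
    assert (He : Mul e e =~ e).
    { unfold e. transitivity (Mul (Mul d (Mul d (Inv d))) (Inv d)); [ring|].
      rewrite refl_ax; reflexivity. }
    assert (H0 : P e Zero).
    { split; [ring|]. intros [m Hm]. apply Hn.
      assert (Hd : d =~ Zero).
      { rewrite <- refl_ax. transitivity (Mul d e); [unfold e; ring|].
        rewrite Hm; ring. }
      transitivity (Add d s); [unfold d; ring|]. rewrite Hd; ring. }
    assert (HM : models (N e) Md).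
    { intros l rr Hin v.
      rewrite !(eval_N e H0 v (fun n => rep e (v n))) by (intro; symmetry; apply cls_rep).
      apply (cls_eq e H0). apply R_of. apply d_ax; exact Hin. }
    assert (HIL : IL (N e)).
    { intros a Ha. simpl. rewrite <- (cls_rep e a) in Ha |- *.
      set (u := rep e a) in *.
      assert (Hu : ~ I e u).
      { intro Hu; apply Ha. apply (cls_eq e H0). unfold R.
        assert (E : Sub u Zero =~ u) by ring. rewrite E; exact Hu. }
      apply (cls_eq e H0).
      eapply R_trans; [exact H0| apply R_mul; [exact H0| apply rep_cls; exact H0 | apply rep_cls; exact H0]|].
      apply (R_trans e H0 _ (Mul u (Inv u))).
      - apply R_mul; [exact H0| apply R_of; reflexivity|].
        apply R_inv; [exact H0| apply rep_cls; exact H0].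
      - apply R_sym. apply key; auto. }
    specialize (H (N e) HM HIL (fun n => cls e (Var n))).
    rewrite !(eval_N e H0 _ Var (fun n => eq_refl)), !subst_var in H.
    apply (cls_eq e H0) in H.
    apply (not_I_e e H0).
    assert (E : e =~ Mul (Inv d) d) by (unfold e; ring).
    apply (I_proper e e _ E). apply I_mul. exact H.
Qed.
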